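(* Let $\mathcal{H}_{1}$, $\mathcal{H}_{2}$ and $\mathcal{G}$ be three pdCGs such that both $\mathcal{H}_{1}$ and $\mathcal{H}_{2}$ are covered by $\mathcal{G}$ in the model inclusion order or, equivalently, such that $\mathcal{P}(\mathcal{H}_{1})$ and $\mathcal{P}(\mathcal{H}_{2})$ are two neighbouring submodels of $\mathcal{P}(\mathcal{G})$. Then $\mathcal{H}_{1}\preceq_{t}\mathcal{H}_{2}$ if and only if, for a given edge $(i,j)\in\mathbb{E}_{\mathcal{G}}$, $\mathcal{H}_{2}=(V, E_{\mathcal{G}}, \mathbb{L}_{\mathcal{G}}, \mathbb{E}_{\mathcal{G}}\setminus \{(i,j)\})$ and $\mathcal{H}_{1}$ is either $(V, E_{\mathcal{G}}\setminus\{(i,j)\}, \mathbb{L}_{\mathcal{G}}, \mathbb{E}_{\mathcal{G}} \setminus \{(i,j)\})$ or $(V, E_{\mathcal{G}}\setminus\{\tau(i,j)\}, \mathbb{L}_{\mathcal{G}}, \mathbb{E}_{\mathcal{G}} \setminus \{(i,j)\})$. Moreover, in the latter case $\mathcal{H}_{1}$ is covered by $\mathcal{H}_{2}$ in the twin order ($\mathcal{H}_{1}\prec_t\mathcal{H}_{2}$ with no $\mathcal F\in\mathcal P$ such that $\mathcal{H}_{1}\prec_t\mathcal F\prec_t\mathcal{H}_{2}$), whereas in all other cases $\mathcal{H}_{1}$ and $\mathcal{H}_{2}$ are $\preceq_{t}$-incomparable.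
   Context: Let $V=\{1,\dots,p\}$ and let $\tau$ be a twin-pairing function on $V$, i.e. $\tau(i)\in V$ with $\tau(\tau(i))=i$ and $\tau(i)\neq i$; it is extended to edges by $\tau(i,j)=(\tau(i),\tau(j))$ (endpoints reordered so the smaller comes first) and to sets elementwise. Fix a partition $(L,R)$ of $V$ with $\tau(L)=R$, numbered so that $L=\{1,\dots,q\}$, $R=\{q+1,\dots,p\}$. Let $F_V=\{(i,j): i,j\in V, i<j\}$, $F_L=\{(i,j)\in F_V: i<\tau(j)\}$, $F_R=\{(i,j)\in F_V: i>\tau(j)\}$. A coloured graph $\mathcal G=(\mathcal V,\mathcal E)$ consists of a partition $\mathcal V$ of $V$ into vertex colour classes and a partition $\mathcal E$ of an edge set $E\subseteq F_V$ into edge colour classes. It is a coloured graph for paired data (pdCG) if every colour class is either atomic (a single element) or twin-pairing (of the form $\{i,\tau(i)\}$ or $\{(i,j),\tau(i,j)\}$ with $(i,j)\neq\tau(i,j)$). The associated RCON model for paired data $\mathcal{P}(\mathcal G)$ is the family of Gaussian distributions whose concentration matrix has zero entries for missing edges and equal entries for vertices or edges in the same colour class; $\mathcal{P}$ denotes the family of all pdCGs on $V$. Every pdCG is equivalently represented by the quadruplet $(V,E,\mathbb L,\mathbb E)$ where $E$ is the union of the edge colour classes, $E_L=E\cap F_L$, $E_R=E\cap F_R$, $\mathbb L=\{i\in L:\{i\}\in\mathcal V\}$ and $\mathbb E=\{(i,j)\in E_L\cap\tau(E_R): \{(i,j)\}\in\mathcal E\}$. The model inclusion order is $\mathcal H\preceq_s\mathcal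 G$ iff $\mathcal P(\mathcal H)\subseteq\mathcal P(\mathcal G)$, which holds iff the edge set of $\mathcal H$ is contained in that of $\mathcal G$ and every vertex (resp. edge) colour class of $\mathcal H$ is a union of vertex (resp. edge) colour classes of $\mathcal G$; $\mathcal H$ is covered by $\mathcal G$ in this order if $\mathcal H\prec_s\mathcal G$ and no $\mathcal F\in\mathcal P$ satisfies $\mathcal H\prec_s\mathcal F\prec_s\mathcal G$. The twin order is $\mathcal H\preceq_t\mathcal G$ iff $E_{\mathcal H}\subseteq E_{\mathcal G}$, $\mathbb L_{\mathcal H}\subseteq\mathbb L_{\mathcal G}$ and $\mathbb E_{\mathcal H}\subseteq\mathbb E_{\mathcal G}$. The graphs covered by $\mathcal G$ in the model inclusion order are exactly: (i) $(V,E_{\mathcal G},\mathbb L_{\mathcal G}\setminus\{i\},\mathbb E_{\mathcal G})$, $i\in\mathbb L_{\mathcal G}$; (ii) $(V,E_{\mathcal G},\mathbb L_{\mathcal G},\mathbb E_{\mathcal G}\setminus\{(i,j)\})$, $(i,j)\in\mathbb E_{\mathcal G}$; (iii) $(V,E_{\mathcal G}\setminus\{(i,j)\},\mathbb L_{\mathcal G},\mathbb E_{\mathcal G}\setminus\{(i,j)\})$, $(i,j)\in\mathbb E_{\mathcal G}$; (iv) $(V,E_{\mathcal G}\setminus\{\tau(i,j)\},\mathbb L_{\mathcal G},\mathbb E_{\mathcal G}\setminus\{(i,j)\})$, $(i,j)\in\mathbb E_{\mathcal G}$; (v) $(V,E_{\mathcal G}\setminus\{(i,j)\},\mathbb L_{\mathcal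 G},\mathbb E_{\mathcal G})$ for $(i,j)\in E_{\mathcal G}$ with $\tau(i,j)\notin E_{\mathcal G}$; (vi) $(V,E_{\mathcal G}\setminus\{(i,\tau(i))\},\mathbb L_{\mathcal G},\mathbb E_{\mathcal G})$ for $(i,\tau(i))\in E_{\mathcal G}$; (vii) $(V,E_{\mathcal G}\setminus\{(i,j),\tau(i,j)\},\mathbb L_{\mathcal G},\mathbb E_{\mathcal G})$ for $(i,j),\tau(i,j)\in E_{\mathcal G}$, $(i,j)\neq\tau(i,j)$, $(i,j),\tau(i,j)\notin\mathbb E_{\mathcal G}$. *)

(* Defs.v *)
From mathcomp Require Import all_boot.
Set Implicit Arguments. Unset Strict Implicit. Unset Printing Implicit Defensive.

(* Vertices V = {0,...,p-1} (0-indexed version of {1,...,p});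
   L = {0,...,q-1}, R = {q,...,p-1}.  Edges are pairs (i,j) with i < j. *)

Definition edge (p : nat) := ('I_p * 'I_p)%type.

Definition Lset (p q : nat) : {set 'I_p} := [set i : 'I_p | i < q].
Definition Rset (p q : nat) : {set 'I_p} := [set i : 'I_p | q <= i].

Definition twin_pairing (p : nat) (tau : 'I_p -> 'I_p) : Prop :=
  (forall i, tau (tau i) = i) /\ (forall i, tau i != i).

Definition tauE (p : nat) (tau : 'I_p -> 'I_p) (e : edge p) : edge p :=
  if tau e.1 < tau e.2 then (tau e.1, tau e.2) else (tau e.2, tau e.1).

Definition FV (p : nat) : {set edge p} := [set e : edge p | e.1 < e.2].
Definition FL (p : nat) (tau : 'I_p -> 'I_p) : {set edge p} :=
  [set e in FV p | e.1 < tau e.2].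
Definition FR (p : nat) (tau : 'I_p -> 'I_p) : {set edge p} :=
  [set e in FV p | tau e.2 < e.1].

Record cgraph (p : nat) := CG {
  vcol : {set {set 'I_p}};
  ecol : {set {set edge p}} }.

Definition edges (p : nat) (G : cgraph p) : {set edge p} := cover (ecol G).

Definition is_cgraph (p : nat) (G : cgraph p) : Prop :=
  partition (vcol G) [set: 'I_p] /\ partition (ecol G) (edges G) /\
  edges G \subset FV p.

Definition is_pdCG (p : nat) (tau : 'I_p -> 'I_p) (G : cgraph p) : Prop :=
  is_cgraph G /\
  (forall C, C \in vcol G ->
     (exists i, C = [set i]) \/ (exists i, C = [set i; tau i])) /\
  (forall D, D \in ecol G ->
     (exists e, D = [set e]) \/
     (exists e, e != tauE tau e /\ D = [set e; tauE tau e])).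

(* quadruplet representation (V, E, LL, EE) *)
Definition EL (p : nat) (tau : 'I_p -> 'I_p) (G : cgraph p) := edges G :&: FL tau.
Definition ER (p : nat) (tau : 'I_p -> 'I_p) (G : cgraph p) := edges G :&: FR tau.
Definition LL (p q : nat) (G : cgraph p) : {set 'I_p} :=
  [set i in Lset p q | [set i] \in vcol G].
Definition EE (p : nat) (tau : 'I_p -> 'I_p) (G : cgraph p) : {set edge p} :=
  [set e in EL tau G :&: (tauE tau @: ER tau G) | [set e] \in ecol G].

Definition has_quad (p q : nat) (tau : 'I_p -> 'I_p) (G : cgraph p)
  (E : {set edge p}) (L : {set 'I_p}) (EEs : {set edge p}) : Prop :=
  edges G = E /\ LL q G = L /\ EE tau G = EEs.

Definition union_of (T : finType) (P : {set {set T}}) (C : {set T}) : Prop :=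
  exists S : {set {set T}}, S \subset P /\ C = cover S.

(* model inclusion order H <=_s G (combinatorial characterisation of
   P(H) \subseteq P(G)) *)
Definition sle (p : nat) (H G : cgraph p) : Prop :=
  edges H \subset edges G /\
  (forall C, C \in vcol H -> union_of (vcol G) C) /\
  (forall D, D \in ecol H -> union_of (ecol G) D).
Definition slt (p : nat) (H G : cgraph p) : Prop := sle H G /\ H <> G.

Definition scovered (p : nat) (tau : 'I_p -> 'I_p) (H G : cgraph p) : Prop :=
  is_pdCG tau H /\ is_pdCG tau G /\ slt H G /\
  ~ (exists F, is_pdCG tau F /\ slt H F /\ slt F G).

Definition tle (p q : nat) (tau : 'I_p -> 'I_p) (H G : cgraph p) : Prop :=
  edges H \subset edges G /\ LL q H \subset LL q G /\ EE tau H \subset EE tau G.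
Definition tlt (p q : nat) (tau : 'I_p -> 'I_p) (H G : cgraph p) : Prop :=
  tle q tau H G /\ H <> G.
Definition tcovered (p q : nat) (tau : 'I_p -> 'I_p) (H G : cgraph p) : Prop :=
  is_pdCG tau H /\ is_pdCG tau G /\ tlt q tau H G /\
  ~ (exists F, is_pdCG tau F /\ tlt q tau H F /\ tlt q tau F G).

Definition twin_config (p q : nat) (tau : 'I_p -> 'I_p) (G H1 H2 : cgraph p) : Prop :=
  exists e, e \in EE tau G /\
    has_quad q tau H2 (edges G) (LL q G) (EE tau G :\ e) /\
    (has_quad q tau H1 (edges G :\ e) (LL q G) (EE tau G :\ e) \/
     has_quad q tau H1 (edges G :\ tauE tau e) (LL q G) (EE tau G :\ e)).

(* Main.v *)
Require Import Defs.
From mathcomp Require Import all_boot zify.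
From Stdlib Require Import Classical.
Set Implicit Arguments. Unset Strict Implicit. Unset Printing Implicit Defensive.

Section S.
Variables (p q : nat) (tau : 'I_p -> 'I_p).
Hypothesis Htau : twin_pairing tau.
Hypothesis HLR : tau @: Lset p q = Rset p q.

Local Notation t := tau.
Local Notation tE := (tauE tau).

Lemma tK i : t (t i) = i. Proof. by case: Htau. Qed.
Lemma t_inj : injective t. Proof. exact: (can_inj tK). Qed.

Lemma tside (i : 'I_p) : (i < q /\ q <= t i) \/ (q <= i /\ t i < q).
Proof.
case: (ltnP i q) => hi.
- left; split => //.
  have : t i \in t @: Lset p q by apply: imset_f; rewrite inE.
  by rewrite HLR inE.
- right; split => //.
  have : i \in t @: Lset p q by rewrite HLR inE.
  case/imsetP=> j; rewrite inE => hj ->; by rewrite tK.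
Qed.

Lemma tneq_nat (i j : 'I_p) : (i : nat) != j -> (t i : nat) != t j.
Proof.
move=> h; apply/negP => /eqP/val_inj/t_inj eij; by rewrite eij eqxx in h.
Qed.

Lemma tE_FV (e : edge p) : e \in FV p -> tE e \in FV p.
Proof.
case: e => x y; rewrite /tauE !inE /= => hxy.
have : (t x : nat) != t y by apply: tneq_nat; lia.
case: ifP => /= h1 h2; lia.
Qed.

Lemma tEK (e : edge p) : e \in FV p -> tE (tE e) = e.
Proof.
case: e => x y; rewrite /tauE !inE /= => hxy.
case: (ltnP (t x) (t y)) => h1 /=; rewrite !tK.
- by rewrite hxy.
- have -> : (y < x) = false by lia. done.
Qed.

Lemma FL_FV e : e \in FL tau -> e \in FV p.
Proof. by rewrite inE => /andP[]. Qed.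
Lemma FR_FV e : e \in FR tau -> e \in FV p.
Proof. by rewrite inE => /andP[]. Qed.

Lemma FL_FR e : e \in FL tau -> tE e \in FR tau.
Proof.
case: e => x y; rewrite /tauE !inE /= => /andP[hxy hl].
have := tside x; have := tside y.
have : (t x : nat) != t y by apply: tneq_nat; lia.
case: ifP => /= h1; rewrite ?tK => h2 sy sx; lia.
Qed.

Lemma FR_FL e : e \in FR tau -> tE e \in FL tau.
Proof.
case: e => x y; rewrite /tauE !inE /= => /andP[hxy hl].
have := tside x; have := tside y.
have : (t x : nat) != t y by apply: tneq_nat; lia.
case: ifP => /= h1; rewrite ?tK => h2 sy sx; lia.
Qed.

Lemma FL_notFR e : e \in FL tau -> e \notin FR tau.
Proof. rewrite !inE => /andP[_ h]; apply/negP => /andP[_ h']; lia. Qed.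

Lemma FR_notFL e : e \in FR tau -> e \notin FL tau.
Proof. by move=> h; apply/negP => /FL_notFR; rewrite h. Qed.

Lemma FL_self e : e \in FL tau -> tE e != e.
Proof.
move=> h; apply/eqP => he; have := FL_FR h; rewrite he.
by rewrite (negbTE (FL_notFR h)).
Qed.

Lemma FR_self e : e \in FR tau -> tE e != e.
Proof.
move=> h; apply/eqP => he; have := FR_FL h; rewrite he => h'.
by rewrite (negbTE (FL_notFR h')) in h.
Qed.

Lemma tri e : e \in FV p -> tE e != e -> (e \in FL tau) || (e \in FR tau).
Proof.
case: e => x y; rewrite !inE /= => hxy hs.
apply/negPn/negP; rewrite negb_or => /andP [h1 h2].
have exy : x = t y by apply: val_inj => /=; lia.
move: hs; rewrite /tauE /= exy tK.
have -> : (y < t y) = false by lia.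
by rewrite eqxx.
Qed.

Definition rep (e : edge p) := if e \in FL tau then e else tE e.

Lemma rep_tE e : e \in FV p -> rep (tE e) = rep e.
Proof.
move=> hv; rewrite /rep.
case: (boolP (e \in FL tau)) => hl.
- by rewrite (negbTE (FR_notFL (FL_FR hl))) tEK.
- have [hs0|hs] := eqVneq (tE e) e; first by rewrite hs0 (negbTE hl) hs0.
  have := tri hv hs; rewrite (negbTE hl) /= => hr.
  by rewrite FR_FL.
Qed.

Lemma rep_eq e g : e \in FV p -> g \in FV p -> rep g = rep e -> g = e \/ g = tE e.
Proof.
move=> he hg; rewrite /rep.
case: ifP => hg1; case: ifP => he1 => h.
- by left.
- by right.
- by right; rewrite -h tEK.
- by left; rewrite -(tEK hg) h tEK.
Qed.

Lemma rep_FL e : e \in FV p -> tE e != e -> rep e \in FL tau.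
Proof.
move=> hv hs; rewrite /rep; case: ifP => // hl.
by have := tri hv hs; rewrite hl /= => /FR_FL.
Qed.

Lemma rep_FLid e : e \in FL tau -> rep e = e.
Proof. by rewrite /rep => ->. Qed.

Lemma part_eq (T : finType) (P : {set {set T}}) D A B x :
  partition P D -> A \in P -> B \in P -> x \in A -> x \in B -> A = B.
Proof.
move=> /and3P[_ tI _] hA hB xA xB.
by rewrite -(def_pblock tI hA xA) (def_pblock tI hB xB).
Qed.

Lemma part_cover (T : finType) (P : {set {set T}}) D x :
  partition P D -> x \in D -> exists2 C, C \in P & x \in C.
Proof. by move=> /and3P[/eqP <- _ _] /bigcupP. Qed.

Lemma part_sub (T : finType) (P : {set {set T}}) D C x :
  partition P D -> C \in P -> x \in C -> x \in D.
Proof.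
move=> /and3P[/eqP <- _ _] hC xC; apply/bigcupP; by exists C.
Qed.

Definition aV (H : cgraph p) i := [set i] \in vcol H.
Definition aE (H : cgraph p) (e : edge p) := [set e] \in ecol H.

Section PD.
Variable H : cgraph p.
Hypothesis HH : is_pdCG tau H.

Lemma vpart : partition (vcol H) [set: 'I_p].
Proof. by case: HH => [[]]. Qed.
Lemma epart : partition (ecol H) (edges H).
Proof. by case: HH => [[_ []]]. Qed.
Lemma EFV x : x \in edges H -> x \in FV p.
Proof. by case: HH => [[_ [_ /subsetP h]]] _ /h. Qed.

Lemma vclass i : [set i] \in vcol H \/ [set i; t i] \in vcol H.
Proof.
have [C hC iC] := part_cover vpart (in_setT i).
case: HH => _ [/(_ C hC) hv _].
case: hv => [[j Cj]|[j Cj]]; move: iC; rewrite Cj.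
- by move/set1P => ->; left; rewrite -Cj.
- case/set2P => ->; first by right; rewrite -Cj.
  by rewrite tK setUC; right; rewrite -Cj.
Qed.

Lemma pairV_notatomic i : [set i; t i] \in vcol H -> ~~ aV H i.
Proof.
move=> hp; apply/negP => ha.
have := part_eq vpart ha hp (set11 i) (set21 _ _) => e.
have : t i \in [set i] by rewrite e set22.
move/set1P => e'; by case: Htau => _ /(_ i); rewrite e' eqxx.
Qed.

Lemma aV_t1 i : aV H i -> aV H (t i).
Proof.
move=> ha; case: (vclass (t i)) => // hp.
by move: hp; rewrite tK setUC => /pairV_notatomic; rewrite ha.
Qed.

Lemma aV_t i : aV H (t i) = aV H i.
Proof.
apply/idP/idP; last exact: aV_t1.
by move/aV_t1; rewrite tK.
Qed.

Lemma eclass x : x \in edges H ->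
  [set x] \in ecol H \/ (tE x != x /\ [set x; tE x] \in ecol H).
Proof.
move=> xE; have [C hC xC] := part_cover epart xE.
case: HH => _ [_ /(_ C hC) hv].
case: hv => [[j Cj]|[j [hj Cj]]]; move: xC; rewrite Cj.
- by move/set1P => ->; left; rewrite -Cj.
- case/set2P => ->; first by right; rewrite eq_sym -Cj.
  have jF : j \in FV p by apply: EFV; apply: (part_sub epart hC); rewrite Cj set21.
  right; rewrite tEK // setUC -Cj; split => //.
Qed.

Lemma pair_sub x : [set x; tE x] \in ecol H -> tE x \in edges H.
Proof. move=> h; apply: (part_sub epart h); exact: set22. Qed.

Lemma pair_notatomic x : tE x != x -> [set x; tE x] \in ecol H -> ~~ aE H x.
Proof.
move=> hs hp; apply/negP => ha.
have := part_eq epart ha hp (set11 x) (set21 _ _) => e.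
have : tE x \in [set x] by rewrite e set22.
by move/set1P => /eqP; rewrite (negbTE hs).
Qed.

Lemma aE_t x : x \in edges H -> tE x \in edges H -> aE H x -> aE H (tE x).
Proof.
move=> xE txE ha; case: (eclass txE) => // [[hs hp]].
move: hp hs; rewrite tEK ?EFV // setUC eq_sym => hp hs.
by have := pair_notatomic hs hp; rewrite ha.
Qed.

Lemma EE_sub y : y \in EE tau H -> [/\ y \in edges H, y \in FL tau & tE y \in edges H].
Proof.
rewrite /EE /EL /ER in_set in_setI in_setI => /andP[/andP[/andP[yE yL] /imsetP[z]]].
rewrite in_setI => /andP[zE zR] hy _; have zF := FR_FV zR.
by split => //; rewrite hy tEK.
Qed.

Lemma EE_mem y : y \in edges H -> y \in FL tau -> tE y \in edges H ->
  (y \in EE tau H) = aE H y.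
Proof.
move=> yE yL tyE; rewrite /EE /EL /ER in_set in_setI in_setI yE yL /=.
have -> : y \in tE @: (edges H :&: FR tau) => //.
apply/imsetP; exists (tE y); first by rewrite inE tyE FL_FR.
by rewrite tEK // FL_FV.
Qed.

Lemma aE_char x : x \in edges H ->
  aE H x = [|| tE x \notin edges H, tE x == x | rep x \in EE tau H].
Proof.
move=> xE; case: (boolP (tE x \in edges H)) => txE /=; last first.
  case: (eclass xE) => // [[_ hp]]; by rewrite (pair_sub hp) in txE.
have [hs|hs] := eqVneq (tE x) x => /=.
  case: (eclass xE) => // [[hs' _]]; by rewrite hs eqxx in hs'.
have xF := EFV xE; case/orP: (tri xF hs) => hl.
  by rewrite rep_FLid // EE_mem.
rewrite /rep (negbTE (FR_notFL hl)) EE_mem ?FR_FL ?tEK //.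
apply/idP/idP; first exact: aE_t.
by move=> h; have := aE_t txE _ h; rewrite tEK //; apply.
Qed.

Definition rv (i : 'I_p) := if i < q then i else t i.

Lemma aV_LL i : aV H i = (rv i \in LL q H).
Proof.
rewrite /LL /rv; case: ifP => hi; rewrite !inE.
- by rewrite hi.
- have := tside i; rewrite hi => -[[]//|[_ ->]] /=.
  by rewrite -/(aV H (t i)) aV_t.
Qed.

End PD.

Lemma vcol_sub H H' (HH : is_pdCG tau H) (HH' : is_pdCG tau H')
  (eqa : forall i, aV H i = aV H' i) C : C \in vcol H -> C \in vcol H'.
Proof.
move=> hC; case: (HH) => _ [/(_ C hC) [[i ei]|[i ei]] _]; subst C.
- by move: hC; rewrite -/(aV H i) eqa.
- have na := pairV_notatomic HH hC; rewrite eqa in na.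
  by case: (vclass HH' i) => // h; rewrite /aV h in na.
Qed.

Lemma ecol_sub H H' (HH : is_pdCG tau H) (HH' : is_pdCG tau H')
  (eE : edges H = edges H') (eqa : forall x, x \in edges H -> aE H x = aE H' x) D :
  D \in ecol H -> D \in ecol H'.
Proof.
move=> hD; case: (HH) => _ [_ /(_ D hD) [[x ex]|[x [hx ex]]]]; subst D.
- have xE := part_sub (epart HH) hD (set11 x).
  by move: hD; rewrite -/(aE H x) eqa.
- have xE := part_sub (epart HH) hD (set21 _ _).
  have na : ~~ aE H x by apply: (pair_notatomic HH _ hD); rewrite eq_sym.
  rewrite eqa // in na.
  have xE' : x \in edges H' by rewrite -eE.
  by case: (eclass HH' xE') => [h|[_ h]] //; rewrite /aE h in na.
Qed.

Lemma quad_inj H H' (HH : is_pdCG tau H) (HH' : is_pdCG tau H') :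
  edges H = edges H' -> LL q H = LL q H' -> EE tau H = EE tau H' -> H = H'.
Proof.
move=> eE eL eX.
have eV i : aV H i = aV H' i by rewrite (aV_LL HH) (aV_LL HH') eL.
have eA x : x \in edges H -> aE H x = aE H' x.
  move=> xE; have xE' : x \in edges H' by rewrite -eE.
  by rewrite (aE_char HH xE) (aE_char HH' xE') eE eX.
have vc : vcol H = vcol H'.
  by apply/setP => C; apply/idP/idP; apply: vcol_sub => // i; rewrite eV.
have ec : ecol H = ecol H'.
  apply/setP => D; apply/idP/idP; apply: ecol_sub => // x.
  by rewrite -eE => xE; rewrite eA.
destruct H as [v e], H' as [v' e']; simpl in *; by subst.
Qed.

Lemma union1 (T : finType) (P : {set {set T}}) x : union_of P [set x] -> [set x] \in P.
Proof.
case=> S [/subsetP sub cov].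
have : x \in cover S by rewrite -cov set11.
case/bigcupP => C hC xC.
have CS : C \subset [set x] by rewrite cov; apply: (bigcup_sup C hC).
have eC : C = [set x] by apply/eqP; rewrite eqEsubset CS sub1set xC.
by rewrite -eC; apply: sub.
Qed.

Lemma union_in (T : finType) (P : {set {set T}}) A : A \in P -> union_of P A.
Proof. move=> h; exists [set A]; split; by rewrite ?sub1set ?cover1. Qed.

Lemma union_2 (T : finType) (P : {set {set T}}) A B :
  A \in P -> B \in P -> union_of P (A :|: B).
Proof.
move=> hA hB; exists [set A; B]; split.
  by apply/subsetP => C /set2P [->|->].
apply/setP => y; rewrite inE; apply/orP/bigcupP.
- by case=> h; [exists A; rewrite ?set21 | exists B; rewrite ?set22].
- by case=> C /set2P [->|->] h; [left|right].
Qed.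

Lemma sle_char H G (HH : is_pdCG tau H) (HG : is_pdCG tau G) :
  sle H G <-> [/\ edges H \subset edges G, forall i, aV H i -> aV G i &
                  forall x, x \in edges H -> aE H x -> aE G x].
Proof.
split.
- case=> [sE [sV sEd]]; split => //.
  + by move=> i hi; apply: union1; apply: sV.
  + by move=> x _ hx; apply: union1; apply: sEd.
- case=> [sE sV sEd]; split => //; split.
  + move=> C hC; case: (HH) => _ [/(_ C hC) [[i ei]|[i ei]] _]; subst C.
    * by apply: union_in; apply: sV.
    * case: (boolP (aV G i)) => hg.
        by apply: union_2 => //; rewrite -/(aV G (t i)) aV_t.
      by case: (vclass HG i) => h; [rewrite /aV h in hg | apply: union_in].
  + move=> D hD; case: (HH) => _ [_ /(_ D hD) [[x ex]|[x [hx ex]]]]; subst D.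
    * have xE := part_sub (epart HH) hD (set11 x).
      by apply: union_in; apply: sEd.
    * have xE := part_sub (epart HH) hD (set21 _ _).
      have txE := pair_sub HH hD.
      have xG := subsetP sE _ xE; have txG := subsetP sE _ txE.
      case: (boolP (aE G x)) => hg.
        by apply: union_2 => //; apply: aE_t.
      by case: (eclass HG xG) => [h|[_ h]]; [rewrite /aE h in hg | apply: union_in].
Qed.

Lemma realize (G0 : cgraph p) (HG0 : is_pdCG tau G0) (E X : {set edge p}) :
  E \subset FV p -> X \subset E :&: FL tau -> {in X, forall x, tE x \in E} ->
  exists H, [/\ is_pdCG tau H, vcol H = vcol G0, edges H = E &
     forall x, x \in E -> aE H x = [|| tE x \notin E, tE x == x | rep x \in X]].
Proof.
move=> /subsetP EF _ _.
pose fm x := [|| tE x \notin E, tE x == x | rep x \in X].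
pose A := [set x in E | fm x].
pose ec := [set [set x] | x in A] :|: [set [set x; tE x] | x in E :\: A].
have clos x : x \in A -> tE x \in E -> tE x \in A.
  rewrite !inE /fm => /andP[xE hf] txE; rewrite txE /= tEK ?EF // xE /= rep_tE ?EF //.
  by move: hf; rewrite txE /= eq_sym.
have nA x : x \in E :\: A -> [/\ x \in E, tE x \in E & tE x != x].
  rewrite !inE => /andP[hn xE]; rewrite xE /= in hn.
  by move: hn; rewrite /fm !negb_or negbK xE => /and3P[-> -> _].
have cls y D : D \in ec -> y \in D -> D = (if y \in A then [set y] else [set y; tE y]).
  rewrite inE => /orP[/imsetP[x xA ->] /set1P ->|/imsetP[x xnA ->]]; first by rewrite xA.
  have [xE txE hs] := nA x xnA.
  case/set2P => ->.
  - by move: xnA; rewrite inE => /andP[/negbTE -> _].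
  - have : tE x \notin A.
      apply/negP => /clos; rewrite tEK ?EF // => /(_ xE).
      by move: xnA; rewrite inE => /andP[/negbTE ->].
    by move/negbTE => ->; rewrite tEK ?EF // setUC.
have cov : cover ec = E.
  apply/setP => y; apply/bigcupP/idP => [[D hD yD]|yE].
  - move: hD yD; rewrite inE => /orP[/imsetP[x xA ->] /set1P ->|/imsetP[x xnA ->]].
      by move: xA; rewrite inE => /andP[].
    by have [xE txE _] := nA x xnA; case/set2P => ->.
  - exists (if y \in A then [set y] else [set y; tE y]); last first.
      by case: ifP => _; rewrite ?set11 ?set21.
    rewrite inE; case: ifP => hy; apply/orP; [left; exact: imset_f | right].
    by apply: imset_f; rewrite inE hy yE.
have pe : partition ec E.
  apply/and3P; split; first by rewrite cov.
  - apply/trivIsetP => D1 D2 h1 h2 hne.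
    rewrite -setI_eq0; apply/eqP/setP => y; rewrite !inE.
    apply/negP => /andP[y1 y2].
    by move: hne; rewrite (cls y D1 h1 y1) (cls y D2 h2 y2) eqxx.
  - apply/negP; rewrite inE => /orP[/imsetP[x _ e0]|/imsetP[x _ e0]].
    + by have := set11 x; rewrite -e0 inE.
    + by have := set21 x (tE x); rewrite -e0 inE.
have s1 x : ([set x] \in ec) = (x \in A).
  apply/idP/idP => [h|hx]; last by rewrite inE; apply/orP; left; apply: imset_f.
  have xE : x \in E by have := part_sub pe h (set11 x).
  move: (cls x _ h (set11 x)); case: ifP => // hx h'.
  have : tE x \in [set x] by rewrite h' set22.
  move/set1P => e'.
  have xnA : x \in E :\: A by rewrite inE hx xE.
  by have [_ _] := nA x xnA; rewrite e' eqxx.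
have eE : edges (CG (vcol G0) ec) = E by exact: cov.
exists (CG (vcol G0) ec); split => //.
- case: HG0 => [[vp _] [hv _]]; split.
    split; first exact: vp.
    rewrite eE; split => //; apply/subsetP => y; exact: EF.
  split => //.
  move=> D; rewrite inE => /orP[/imsetP[x _ ->]|/imsetP[x xn ->]].
    by left; exists x.
  right; exists x; have [_ _ hs] := nA x xn; by rewrite eq_sym hs.
- by move=> x xE; rewrite /aE /= s1 inE xE.
Qed.

Lemma EE_from H (HH : is_pdCG tau H) (X : {set edge p}) :
  X \subset edges H :&: FL tau -> {in X, forall x, tE x \in edges H} ->
  (forall x, x \in edges H ->
     aE H x = [|| tE x \notin edges H, tE x == x | rep x \in X]) ->
  EE tau H = X.
Proof.
move=> /subsetP XEL XtE hA; apply/setP => y.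
case: (boolP [&& y \in edges H, y \in FL tau & tE y \in edges H]) => c.
- case/and3P: c => yE yL tyE.
  have := hA y yE; rewrite (aE_char HH yE) tyE /= (negbTE (FL_self yL)) /= rep_FLid //.
- apply/idP/idP => h.
  + by have [a b d] := EE_sub h; rewrite a b d in c.
  + have := XEL y h; rewrite inE => /andP[a b]; have d := XtE y h.
    by rewrite a b d in c.
Qed.

Lemma mainA G H1 H2 : scovered tau H1 G -> scovered tau H2 G -> H1 <> H2 ->
  tle q tau H1 H2 -> twin_config q tau G H1 H2.
Proof.
move=> [P1 [PG [[s1G n1G] nm1]]] [P2 [_ [[s2G n2G] nm2]]] hne [sE [sL sX]].
have ns : ~ sle H1 H2.
  move=> s; apply: nm1; exists H2; split; first exact: P2.
  by split; split.
have aV12 i : aV H1 i -> aV H2 i.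
  by rewrite (aV_LL P1) (aV_LL P2); apply: (subsetP sL).
case: (pickP [pred e | (e \in edges H1) && aE H1 e && ~~ aE H2 e]);
  last first.
  move=> none; exfalso; apply: ns; apply (proj2 (sle_char P1 P2)); split => // x xE ax.
  by apply/negPn/negP => nax; have := none x; rewrite /= xE ax nax.
move=> e /= /andP[/andP[eE1 a1] na2].
have eE2 : e \in edges H2 := subsetP sE _ eE1.
move: (na2); rewrite (aE_char P2 eE2) !negb_or negbK => /and3P[teE2 hs nrep2].
have ne1 : tE e \notin edges H1.
  move: a1; rewrite (aE_char P1 eE1) (negbTE hs) /= => /orP[//|h].
  by rewrite (subsetP sX _ h) in nrep2.
have [sE1G sV1G sA1G] := proj1 (sle_char P1 PG) s1G.
have [sE2G sV2G sA2G] := proj1 (sle_char P2 PG) s2G.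
have aG := sA1G e eE1 a1.
have eG := subsetP sE2G _ eE2.
have teG := subsetP sE2G _ teE2.
have eF := EFV PG eG.
have [f ef] : exists f, f = rep e by eexists.
have fEE : f \in EE tau G.
  by move: aG; rewrite (aE_char PG eG) teG (negbTE hs) ef.
have repf g : g \in FV p -> rep g = f -> g = e \/ g = tE e.
  by move=> gF h; apply: rep_eq => //; rewrite h.
have ftf : f = e \/ f = tE e by rewrite ef /rep; case: ifP; [left|right].
have EGF : edges G \subset FV p by apply/subsetP => y hy; exact: (EFV PG hy).
have Xv : EE tau G :\ f \subset edges G :&: FL tau.
  by apply/subsetP => y; rewrite in_setD1 => /andP[_ /EE_sub [a b _]]; rewrite in_setI a b.
have Xt : {in EE tau G :\ f, forall y, tE y \in edges G}.
  by move=> y; rewrite in_setD1 => /andP[_ /EE_sub [_ _ c]].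
have [K [PK vK EK aK]] := realize PG EGF Xv Xt.
have XK : EE tau K = EE tau G :\ f.
  apply: EE_from => //; rewrite EK //; exact: aK.
have LK : LL q K = LL q G by rewrite /LL vK.
have aVK i : aV K i = aV G i by rewrite /aV vK.
have sKG : sle K G.
  apply (proj2 (sle_char PK PG)); split.
  - by rewrite EK.
  - by move=> i; rewrite aVK.
  - move=> x; rewrite EK => xG; rewrite (aK x xG) (aE_char PG xG).
    case/or3P => [->|->|]; rewrite ?orbT //.
    by rewrite in_setD1 => /andP[_ ->]; rewrite !orbT.
have nKG : K <> G.
  by move=> eKG; have := fEE; rewrite -eKG XK in_setD1 eqxx.
have s2K : sle H2 K.
  apply (proj2 (sle_char P2 PK)); split.
  - by rewrite EK.
  - by move=> i h; rewrite aVK; apply: sV2G.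
  - move=> x xE2 ax; have xG := subsetP sE2G _ xE2.
    have := sA2G x xE2 ax; rewrite (aK x xG) (aE_char PG xG).
    case/or3P => [->|->|hr]; rewrite ?orbT //.
    have xF := EFV PG xG.
    case: (eqVneq (rep x) f) => [hxf|hxf]; last by rewrite !in_setD1 hxf hr !orbT.
    exfalso; case: (repf x xF hxf) => ex; subst x.
    + by rewrite ax in na2.
    + have := aE_t P2 teE2 _ ax; rewrite tEK // => /(_ eE2).
      by rewrite (negbTE na2).
have H2K : H2 = K.
  case: (classic (H2 = K)) => // hn; exfalso; apply: nm2; exists K.
  by split => //; split; split.
have fne y : y \in FL tau -> y != f -> (y != e) && (y != tE e).
  move=> yL hy; have ry := rep_FLid yL; apply/andP; split; apply: contra_neq hy => ey.
  - by rewrite ef -ry ey.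
  - by rewrite ef -ry ey rep_tE.
have XvM : EE tau G :\ f \subset (edges G :\ tE e) :&: FL tau.
  apply/subsetP => y; rewrite in_setD1 => /andP[hy /EE_sub [a b _]].
  by have /andP[_ h2] := fne y b hy; rewrite in_setI in_setD1 h2 a b.
have XtM : {in EE tau G :\ f, forall y, tE y \in edges G :\ tE e}.
  move=> y; rewrite in_setD1 => /andP[hy /EE_sub [a b c]].
  have /andP[h1 _] := fne y b hy.
  rewrite in_setD1 c andbT; apply: contra_neq h1 => h.
  by rewrite -(tEK (FL_FV b)) h tEK.
have EMF : edges G :\ tE e \subset FV p.
  by apply/subsetP => y; rewrite in_setD1 => /andP[_ h]; exact: (EFV PG h).
have [M [PM vM EM aM]] := realize PG EMF XvM XtM.
have XM : EE tau M = EE tau G :\ f.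
  apply: EE_from => //; rewrite EM //; exact: aM.
have aVM i : aV M i = aV G i by rewrite /aV vM.
have sMG : sle M G.
  apply (proj2 (sle_char PM PG)); split.
  - rewrite EM; exact: subD1set.
  - by move=> i; rewrite aVM.
  - move=> x; rewrite EM => xM.
    have xG : x \in edges G by move: xM; rewrite in_setD1 => /andP[].
    rewrite (aM x xM) (aE_char PG xG).
    case/or3P => [h|->|]; rewrite ?orbT //; last first.
      by rewrite in_setD1 => /andP[_ ->]; rewrite !orbT.
    case: (boolP (tE x \in edges G)) => htx //.
    have htx' : tE x = tE e by move: h; rewrite in_setD1 htx andbT negbK => /eqP.
    have ex : x = e by rewrite -(tEK (EFV PG xG)) htx' tEK.
    by subst x; move: aG; rewrite (aE_char PG eG) htx.
have nMG : M <> G.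
  by move=> eMG; have := teG; rewrite -eMG EM in_setD1 eqxx.
have s1M : sle H1 M.
  apply (proj2 (sle_char P1 PM)); split.
  - apply/subsetP => x xE1; rewrite EM in_setD1 (subsetP sE1G _ xE1) andbT.
    by apply: contraNneq ne1 => <-.
  - by move=> i h; rewrite aVM; apply: sV1G.
  - move=> x xE1 ax; have xG := subsetP sE1G _ xE1.
    have xM : x \in edges G :\ tE e.
      by rewrite in_setD1 xG andbT; apply: contraNneq ne1 => <-.
    rewrite (aM x xM); have := sA1G x xE1 ax; rewrite (aE_char PG xG).
    case/or3P => [h|->|hr]; rewrite ?orbT //.
    + by rewrite in_setD1 (negbTE h) andbF.
    + case: (eqVneq (rep x) f) => [hxf|hxf]; last by rewrite !in_setD1 hxf hr !orbT.
      case: (repf x (EFV PG xG) hxf) => ex; subst x.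
      * by rewrite in_setD1 eqxx.
      * by rewrite xE1 in ne1.
have H1M : H1 = M.
  case: (classic (H1 = M)) => // hn; exfalso; apply: nm1; exists M.
  by split => //; split; split.
have LM : LL q M = LL q G by rewrite /LL vM.
exists f; split => //; split.
- by rewrite /has_quad H2K EK LK XK.
- rewrite /has_quad H1M EM XM LM; case: ftf => hf.
  + by right; rewrite hf.
  + by left; rewrite hf.
Qed.

Lemma configT G H1 H2 : twin_config q tau G H1 H2 -> tle q tau H1 H2.
Proof.
case=> f [_ [[e2 [l2 x2]] h1]].
case: h1 => [[e1 [l1 x1]]|[e1 [l1 x1]]];
  by rewrite /tle e1 e2 l1 l2 x1 x2 subxx !subD1set.
Qed.

Lemma mainC G H1 H2 : is_pdCG tau G -> is_pdCG tau H1 -> is_pdCG tau H2 ->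
  H1 <> H2 -> twin_config q tau G H1 H2 -> tcovered q tau H1 H2.
Proof.
move=> PG P1 P2 hne tc.
split => //; split => //; split; first by split => //; exact: configT tc.
case=> F [PF [[[fE1 [fL1 fX1]] n1] [[fE2 [fL2 fX2]] n2]]].
case: tc => f [fEE [[e2 [l2 x2]] h1]].
have [fG _ tfG] := EE_sub fEE.
have [x [xG [e1 [l1 x1]]]] : exists x, x \in edges G /\
    has_quad q tau H1 (edges G :\ x) (LL q G) (EE tau G :\ f).
  by case: h1 => h; [exists f | exists (tE f)]; split.
rewrite e1 e2 in fE1 fE2; rewrite l1 l2 in fL1 fL2; rewrite x1 x2 in fX1 fX2.
have LF : LL q F = LL q G by apply/eqP; rewrite eqEsubset fL1 fL2.
have XF : EE tau F = EE tau G :\ f by apply/eqP; rewrite eqEsubset fX1 fX2.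
case: (boolP (x \in edges F)) => hx.
- apply: n2; apply: quad_inj => //; rewrite ?e2 ?l2 ?x2 //.
  apply/eqP; rewrite eqEsubset fE2 /=; apply/subsetP => y yG.
  case: (eqVneq y x) => [->//|ne]; apply: (subsetP fE1); by rewrite in_setD1 ne yG.
- apply: n1; apply: quad_inj => //; rewrite ?e1 ?l1 ?x1 //.
  apply/eqP; rewrite eqEsubset fE1 /=; apply/subsetP => y yF.
  rewrite in_setD1 (subsetP fE2 _ yF) andbT; by apply: contraNneq hx => <-.
Qed.

End S.

Theorem corollary9 (p q : nat) (tau : 'I_p -> 'I_p)
  (Htau : twin_pairing tau) (HLR : tau @: Lset p q = Rset p q)
  (G H1 H2 : cgraph p)
  (H1cov : scovered tau H1 G) (H2cov : scovered tau H2 G)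
  (Hneq : H1 <> H2) :
  (tle q tau H1 H2 <-> twin_config q tau G H1 H2) /\
  (twin_config q tau G H1 H2 -> tcovered q tau H1 H2) /\
  (~ twin_config q tau G H1 H2 -> ~ twin_config q tau G H2 H1 ->
     ~ tle q tau H1 H2 /\ ~ tle q tau H2 H1).
Proof.
have hne' : H2 <> H1 by move=> h; apply: Hneq.
split; [split|split].
- exact: (mainA Htau HLR H1cov H2cov Hneq).
- exact: configT.
- case: H1cov => [P1 [PG _]]; case: H2cov => [P2 _].
  exact: (mainC Htau HLR PG P1 P2 Hneq).
- move=> n1 n2; split => h.
  + by apply: n1; apply: (mainA Htau HLR H1cov H2cov Hneq).
  + by apply: n2; apply: (mainA Htau HLR H2cov H1cov hne').
Qed.
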